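(* For all $n\ge 1$, $\left|\mathrm{Av}_n[\overline{13}42]\right|=D_{n+1}$, where $D_1=2$, $D_2=1$, $D_3=1$ and $D_n=\sum_{k=1}^{n-3}D_kD_{n-k}$ for $n\ge 4$.
   Context: For $\sigma\in S_n$, the cyclic permutation $[\sigma]$ is the set of all rotations of $\sigma$; $[S_n]$ is the set of cyclic permutations of length $n$. $[\sigma]$ contains the vincular pattern $[\overline{13}42]$ if some rotation of $\sigma$ has entries $a,b,c,d$ appearing in this order with $a,b$ adjacent and $a<d<b<c$; $\mathrm{Av}_n[\overline{13}42]$ is the set of $[\sigma]\in[S_n]$ not containing it. *)

(* Defs.v *)
From mathcomp Require Import all_boot all_fingroup.
Set Implicit Arguments. Unset Strict Implicit. Unset Printing Implicit Defensive.

(* One-line notation of sigma in S_n, with values 0..n-1 (order-isomorphic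
   to the usual 1..n). *)
Definition word n (s : 'S_n) : seq nat := [seq nat_of_ord (s i) | i <- enum 'I_n].

(* The linear word w contains the vincular pattern 13-4-2 with 1,3 adjacent:
   positions i < i+1 < k < l with w_i < w_l < w_(i+1) < w_k. *)
Definition contains_13_42 (w : seq nat) : bool :=
  [exists i : 'I_(size w), exists k : 'I_(size w), exists l : 'I_(size w),
     [&& i.+1 < k, k < l &
       [&& nth 0 w i < nth 0 w l, nth 0 w l < nth 0 w i.+1
         & nth 0 w i.+1 < nth 0 w k]]].

Definition cyc n (s : 'S_n) : {set 'S_n} :=
  [set t : 'S_n | [exists r : 'I_n, word t == rot r (word s)]].

Definition cyc_contains n (s : 'S_n) : bool :=
  [exists t in cyc s, contains_13_42 (word t)].

Definition Av n : {set {set 'S_n}} :=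
  [set cyc s | s : 'S_n & ~~ cyc_contains s].

(* Main.v *)
Require Import Defs.
From mathcomp Require Import all_boot all_fingroup zify.
Set Implicit Arguments. Unset Strict Implicit. Unset Printing Implicit Defensive.
Ltac slia :=
  repeat match goal with
  | H : is_true (_ < _) |- _ => revert H
  | H : is_true (_ <= _) |- _ => revert H
  | H : is_true (_ && _) |- _ => revert H
  | H : @eq ?T _ _ |- _ => unify T nat; revert H
  | H : @eq bool _ true |- _ => revert H
  end;
  repeat match goal with H : _ |- _ => clear H end;
  intros; lia.

Definition occ0 (R : seq nat) : Prop :=
  exists a a' X c d, R = a :: a' :: X /\ subseq [:: c; d] X /\
                     a < d /\ d < a' /\ a' < c.

Definition ccont (W : seq nat) : Prop := exists k, occ0 (rot k W).

Lemma ccont_rot j W : ccont (rot j W) <-> ccont W.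
Proof.
split=> [[k Hk]|[k Hk]].
  by exists (rot_add W j k); rewrite -rot_rot_add.
exists (rot_add (rot j W) (size W - j) k); rewrite -rot_rot_add.
have -> : rot (size W - j) (rot j W) = rotr j (rot j W) by rewrite /rotr size_rot.
by rewrite rotK.
Qed.

Lemma rot_comp i j (W : seq nat) : exists k, rot i (rot j W) = rot k W.
Proof. by exists (rot_add W j i); rewrite rot_rot_add. Qed.

Lemma subseq_mid (s Z M T : seq nat) : subseq s (Z ++ T) -> subseq s (Z ++ M ++ T).
Proof.
move=> h; apply: (subseq_trans h); apply: cat_subseq => //; exact: suffix_subseq.
Qed.

Lemma subseq2_cat (x y : nat) s1 s2 : x \in s1 -> y \in s2 -> subseq [:: x; y] (s1 ++ s2).
Proof.
move=> hx hy; have -> : [:: x; y] = [:: x] ++ [:: y] by [].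
by apply: cat_subseq; rewrite sub1seq.
Qed.

Lemma occ0_size R : occ0 R -> 4 <= size R.
Proof.
move=> [a [a' [X [c [d [-> [S _]]]]]]] /=.
have := size_subseq S => /= ; slia.
Qed.

Lemma ccont_size W : ccont W -> 4 <= size W.
Proof. by move=> [k /occ0_size]; rewrite size_rot. Qed.

Lemma occ_mem k (W : seq nat) (a a' : nat) X (c d : nat) : rot k W = a :: a' :: X -> subseq [:: c; d] X ->
  [/\ a \in W, a' \in W, c \in W & d \in W].
Proof.
move=> E S.
have hX : forall z, z \in X -> z \in W.
  by move=> z hz; rewrite -(mem_rot k) E !inE hz !orbT.
split.
- by rewrite -(mem_rot k) E inE eqxx.
- by rewrite -(mem_rot k) E !inE eqxx orbT.
- by apply: hX; apply: (mem_subseq S); rewrite !inE eqxx.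
- by apply: hX; apply: (mem_subseq S); rewrite !inE eqxx orbT.
Qed.

Lemma ccont_filter (P : pred nat) W k a a' X c d :
  rot k W = a :: a' :: X -> subseq [:: c; d] X -> a < d -> d < a' -> a' < c ->
  P a -> P a' -> P c -> P d -> ccont (filter P W).
Proof.
move=> E S h1 h2 h3 Pa Pa' Pc Pd.
exists (size (filter P (take k W))).
have eW : filter P W = filter P (take k W) ++ filter P (drop k W).
  by rewrite -filter_cat cat_take_drop.
rewrite eW rot_size_cat -filter_cat.
have -> : drop k W ++ take k W = rot k W by [].
rewrite E /= Pa Pa'.
exists a, a', (filter P X), c, d; split => //; split => //.
by rewrite subseq_filter /= Pc Pd S.
Qed.

Lemma ccont_map (f : nat -> nat) W :
  {in W &, forall x y, (f x < f y) = (x < y)} -> ccont W -> ccont (map f W).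
Proof.
move=> mono [k [a [a' [X [c [d [E [S [h1 [h2 h3]]]]]]]]]].
have [ma ma' mc md] := occ_mem E S.
exists k; rewrite -map_rot E /=.
exists (f a), (f a'), (map f X), (f c), (f d); split => //; split.
  by have := map_subseq f S.
by rewrite !mono.
Qed.

Lemma rot_head (W : seq nat) k x s : uniq W -> rot k W = x :: s ->
  rot k W = rot (index x W) W.
Proof.
move=> U E.
case: (leqP (size W) k) => hk.
  rewrite rot_oversize // in E *.
  by rewrite E /= eqxx rot0.
have hx : x = nth 0 W k.
  move: E; rewrite /rot (drop_nth 0 hk) /=; by case.
by rewrite hx index_uniq.
Qed.

Lemma rot_head0 (W : seq nat) k x s s' : uniq W -> W = x :: s' -> rot k W = x :: s ->
  rot k W = W.
Proof.
move=> U EW E; rewrite (rot_head U E).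
have -> : index x W = 0 by rewrite EW /= eqxx.
by rewrite rot0.
Qed.
Definition Dp (y : nat) V := exists c d, subseq [:: c; d] V /\ d < y /\ y < c.

Lemma min_ins m y V : uniq (m :: y :: V) -> (forall x, x \in y :: V -> m < x) ->
  (ccont (m :: y :: V) <-> ccont (y :: V) \/ Dp y V).
Proof.
move=> U gt.
have hD : Dp y V -> ccont (m :: y :: V).
  move=> [c [d [S [h1 h2]]]]; exists 0; rewrite rot0.
  exists m, y, V, c, d; split => //; split => //; split => //.
  apply: gt; rewrite inE; apply/orP; right; apply: (mem_subseq S).
  by rewrite !inE eqxx orbT.
split.
  move=> [k [a [a' [X [c [d [E [S [h1 [h2 h3]]]]]]]]]].
  have [ma ma' mc md] := occ_mem E S.
  have gt' : forall z, z \in m :: y :: V -> z != m -> m < z.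
    by move=> z; rewrite inE => /orP [/eqP -> | hz]; [rewrite eqxx | move=> _; apply: gt].
  case: (eqVneq a m) => [am | anm].
    subst a; have := rot_head0 U (erefl _) E; rewrite E => -[ea' eX]; subst a' X.
    by right; exists c, d.
  left.
  have hm : m \notin y :: V by move: U => /= /andP [].
  have ef : filter (predC1 m) (m :: y :: V) = y :: V.
    rewrite (lock (y :: V)) /= eqxx -lock; apply/all_filterP/allP => z hz /=.
    by apply/eqP => ez; move: hm; rewrite -ez hz.
  have hma := gt' a ma anm.
  rewrite -ef; apply: (ccont_filter (P := predC1 m) E S h1 h2 h3) => /=; rewrite ?anm //;
    apply/eqP => ez; subst; slia.
move=> [[k [a [a' [X [c [d [E [S [h1 [h2 h3]]]]]]]]]] | /hD //].
move: E; rewrite /rot.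
case eD: (drop k (y :: V)) => [|z1 [|z2 Z]] /=.
- have hk : size (y :: V) <= k by rewrite -subn_eq0 -size_drop eD.
  rewrite take_oversize // => E.
  exists 1; rewrite rot1_cons E /=.
  exists a, a', (rcons X m), c, d; split => //; split => //.
  by apply: (subseq_trans S); rewrite -cats1 prefix_subseq.
- case: k eD => [|k] eD.
    by rewrite take0.
  rewrite /= => -[_ ea' EX]; subst a'; apply: hD; exists c, d; split => //.
  by apply: (subseq_trans S); rewrite -EX take_subseq.
- move=> [ea ea' EX]; subst a a'.
  exists k.+1; rewrite /rot /= eD /=.
  exists z1, z2, (Z ++ m :: take k (y :: V)), c, d; split => //; split => //.
  have -> : m :: take k (y :: V) = [:: m] ++ take k (y :: V) by [].
  by apply: subseq_mid; rewrite EX.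
Qed.
Lemma rot_adj (W : seq nat) k a a' X : rot k W = a :: a' :: X ->
  (exists p q, W = p ++ a :: a' :: q) \/ (exists Y, W = a' :: rcons Y a).
Proof.
rewrite /rot; case eD: (drop k W) => [|z1 [|z2 Z]] /= E.
- left; exists [::], X; rewrite -E -{1}(cat_take_drop k W) eD cats0 //.
- right; move: E => [ez EX]; subst z1; exists X.
  by rewrite -(cat_take_drop k W) eD EX cats1.
- left; move: E => [e1 e2 EX]; subst z1 z2; exists (take k W), Z.
  by rewrite -{1}(cat_take_drop k W) eD.
Qed.

Lemma cat_adj (b : nat) s1 s2 p x y q : s1 ++ s2 = p ++ x :: y :: q ->
  all (fun z => z <= b) s1 -> all (fun z => b < z) s2 -> x <= b -> b < y -> head 0 s2 = y.
Proof.
elim: p s1 => [|p0 p IH] [|s0 s1] /=.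
- move=> -> _ /= /andP [h _] hx _; slia.
- case: s1 => [|s1' s1] /=.
    by move=> [_ ->].
  move=> [_ ey _]; subst s1'; move=> /and3P [_ h _] _ _ hy; slia.
- move=> -> _ /allP h hx _.
  have : x \in p0 :: p ++ x :: y :: q by rewrite inE mem_cat inE eqxx !orbT.
  move/h => /=; slia.
- move=> [_ E] /andP [_ h1] h2 hx hy; exact: IH E h1 h2 hx hy.
Qed.
Lemma char_B b L H : uniq (b :: L ++ H) -> L != [::] ->
  all (fun x => x < b) L -> all (fun x => b < x) H ->
  (ccont (b :: L ++ H) <->
   ccont (b :: L) \/ (exists2 c, c \in H & head 0 H < c) \/ ccont H).
Proof.
move=> U nL /allP aL /allP aH.
have eW : b :: L ++ H = (b :: L) ++ H by [].
have hmid : (exists2 c, c \in H & head 0 H < c) -> ccont (b :: L ++ H).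
  move=> [c hc hlt].
  case: H aH U eW hc hlt => [|h1 H'] aH U eW hc hlt; first by rewrite in_nil in hc.
  rewrite inE /= in hc hlt.
  have hc' : c \in H' by move: hc => /orP [/eqP ec|//]; subst; slia.
  case/lastP: L nL aL U eW => [//|L' l] _ aL U eW.
  exists (size (b :: L')).
  have -> : b :: rcons L' l ++ h1 :: H' = (b :: L') ++ (l :: h1 :: H').
    by rewrite /= cat_rcons.
  rewrite rot_size_cat.
  exists l, h1, (H' ++ b :: L'), c, b; split => //; split.
    by apply: subseq2_cat => //; rewrite inE eqxx.
  have := aL l; rewrite mem_rcons inE eqxx => /(_ isT) hl.
  have := aH h1; rewrite inE eqxx => /(_ isT) hh.
  slia.
split; last first.
  case=> [hB | [hm | hH]]; [ | exact: hmid hm | ].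
    move: hB => [k [a [a' [X [c [d [E [S [h1 [h2 h3]]]]]]]]]].
    have memU : forall z, z \in b :: L -> z <= b.
      by move=> z; rewrite inE => /orP [/eqP -> // | /aL]; slia.
    move: E; rewrite /rot; case eD: (drop k (b :: L)) => [|z1 [|z2 Z]] /= E.
    + have hk : size (b :: L) <= k by rewrite -subn_eq0 -size_drop eD.
      move: E; rewrite take_oversize // => -[ea EL]; subst.
      have := memU a'; rewrite !inE eqxx !orbT => /(_ isT); slia.
    + case: k eD E => [|k] eD; first by rewrite take0.
      rewrite /= => -[_ ea' EX]; subst a'.
      have : c \in b :: L.
        rewrite inE; apply/orP; right; apply: (mem_take (s := L) (n0 := k)).
        by rewrite EX; apply: (mem_subseq S); rewrite inE eqxx.
      move/memU; slia.
    + move: E => [ea ea' EX]; subst a a'.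
      have hk : k < size (b :: L).
        by rewrite -subn_gt0 -size_drop eD.
      exists k; rewrite eW /rot drop_cat take_cat hk eD -catA.
      exists z1, z2, (Z ++ H ++ take k (b :: L)), c, d; split => //; split => //.
      by apply: subseq_mid; rewrite EX.
  move: hH => [k [a [a' [X [c [d [E [S [h1 [h2 h3]]]]]]]]]].
  move: E; rewrite /rot; case eD: (drop k H) => [|z1 [|z2 Z]] /= E.
  + have hk : size H <= k by rewrite -subn_eq0 -size_drop eD.
    move: E; rewrite take_oversize // => EH.
    exists (size (b :: L)); rewrite eW rot_size_cat EH.
    exists a, a', (X ++ b :: L), c, d; split => //; split => //.
    by apply: (subseq_trans S); apply: prefix_subseq.
  + case: k eD E => [|k] eD; first by rewrite take0.
    move=> [ez EX]; subst; apply: hmid; exists c.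
      rewrite -(cat_take_drop k.+1 H) mem_cat EX; apply/orP; left.
      by rewrite inE; apply/orP; right; apply: (mem_subseq S); rewrite inE eqxx.
    by rewrite -(cat_take_drop k.+1 H) EX.
  + move: E => [ea ea' EX]; subst a a'.
    exists (size (b :: L ++ take k H)).
    have -> : b :: L ++ H = (b :: L ++ take k H) ++ drop k H.
      by rewrite /= -catA cat_take_drop.
    rewrite rot_size_cat eD.
    exists z1, z2, (Z ++ b :: L ++ take k H), c, d; split => //; split => //.
    have -> : Z ++ b :: L ++ take k H = Z ++ (b :: L) ++ take k H by [].
    by apply: subseq_mid; rewrite EX.
move=> [k [a [a' [X [c [d [E [S [h1 [h2 h3]]]]]]]]]].
have [ma ma' mc md] := occ_mem E S.
have cls : forall z, z \in b :: L ++ H -> [\/ z = b, z \in L | z \in H].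
  move=> z; rewrite inE mem_cat => /orP [/eqP -> | /orP [hz|hz]];
    [exact: Or31 | exact: Or32 | exact: Or33].
have hlt : forall z, z \in b :: L ++ H -> z < b -> z \in L.
  by move=> z /cls [->|//|/aH]; slia.
have hgt : forall z, z \in b :: L ++ H -> b < z -> z \in H.
  by move=> z /cls [->|/aL|//]; slia.
have UH : uniq H by move: U; rewrite /= cat_uniq => /andP [_ /and3P [_ _ ->]].
case: (ltngtP a b) => hab.
-
  case: (ltngtP a' b) => ha'b.
  + case: (leqP c b) => hcb.
    * left.
      have <- : filter (fun x => x <= b) (b :: L ++ H) = b :: L.
        rewrite /= leqnn filter_cat.
        have -> : filter (fun x => x <= b) L = L.
          by apply/all_filterP/allP => z /aL /=; slia.
        suff -> : filter (fun x => x <= b) H = [::] by rewrite cats0.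
        apply/eqP; rewrite -[_ == _]negbK -has_filter; apply/hasP => -[z /aH hz /=]; slia.
      apply: (ccont_filter E S h1 h2 h3) => /=; slia.
    * left.
      have mcH := hgt c mc hcb.
      have ef : filter (fun x => (x < b) || (x == c)) (b :: L ++ H) = L ++ [:: c].
        rewrite /= ltnn /=.
        have -> : (b == c) = false by apply/eqP; slia.
        rewrite filter_cat.
        have -> : filter (fun x => (x < b) || (x == c)) L = L.
          by apply/all_filterP/allP => z /aL /= ->.
        congr (_ ++ _).
        rewrite -(filter_pred1_uniq UH mcH); apply: eq_in_filter => z /aH hz /=.
        have -> : (z < b) = false by apply/negbTE; rewrite -leqNgt; slia.
        by [].
      have hc : ccont (L ++ [:: c]).
        rewrite -ef; apply: (ccont_filter E S h1 h2 h3) => /=; 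
          rewrite ?eqxx ?orbT //; apply/orP; left; slia.
      have := ccont_map (f := fun x => if x == c then b else x) _ hc.
      have -> : map (fun x => if x == c then b else x) (L ++ [:: c]) = L ++ [:: b].
        rewrite map_cat /= eqxx; congr (_ ++ _).
        transitivity (map id L); last by rewrite map_id.
        apply/eq_in_map => z /aL hz /=.
        by have -> : (z == c) = false by apply/eqP; slia.
      have -> : L ++ [:: b] = rot 1 (b :: L) by rewrite rot1_cons cats1.
      rewrite ccont_rot; apply.
      move=> x y; rewrite !mem_cat !inE => hx hy.
      case: (eqVneq x c) => [ex|nx]; case: (eqVneq y c) => [ey|ny].
      - by subst; rewrite !ltnn.
      - have : y \in L by move: hy; rewrite (negbTE ny) orbF.
        move/aL => hy'; subst; apply/idP/idP; slia.
      - have : x \in L by move: hx; rewrite (negbTE nx) orbF.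
        move/aL => hx'; subst; apply/idP/idP; slia.
      - by [].
  +
    right; left; exists c; first by apply: hgt => //; slia.
    have aL' : all (fun z => z <= b) (b :: L).
      by apply/allP => z; rewrite inE => /orP [/eqP -> // | /aL]; slia.
    case: (rot_adj E) => [[p [q EW]] | [Y EW]].
      have hH : all (fun z => b < z) H by apply/allP.
      by rewrite (cat_adj (s1 := b :: L) EW aL' hH) //; slia.
    by move: EW => [ea' _]; slia.
  +
    exfalso; subst a'.
    have mcH := hgt c mc h3.
    case: (rot_adj E) => [[p [q EW]] | [Y EW]].
      case: p EW => [|p0 p] /=.
        by move=> [ea _]; slia.
      move=> [ep EW]; subst p0.
      move: U; rewrite EW /= mem_cat !inE eqxx !orbT //.
    move: EW => [EW].
    have : H != [::] by apply/eqP => eH; rewrite eH in mcH.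
    case/lastP eH: H => [//|H' h] _.
    rewrite eH -rcons_cat in EW.
    have := congr1 (last 0) EW; rewrite !last_rcons => eh; subst h.
    have := aH a; rewrite eH mem_rcons inE eqxx => /(_ isT); slia.
-
  right; right.
  have <- : filter (fun x => b < x) (b :: L ++ H) = H.
    rewrite /= ltnn filter_cat.
    have -> : filter (fun x => b < x) L = [::].
      apply/eqP; rewrite -[_ == _]negbK -has_filter; apply/hasP => -[z /aL hz /=]; slia.
    by apply/all_filterP/allP.
  apply: (ccont_filter E S h1 h2 h3) => /=; slia.
-
  subst a.
  have ef : filter (fun x => b <= x) (b :: L ++ H) = b :: H.
    rewrite /= leqnn filter_cat.
    have -> : filter (fun x => b <= x) L = [::].
      apply/eqP; rewrite -[_ == _]negbK -has_filter; apply/hasP => -[z /aL hz /=]; slia.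
    by congr (_ :: _); apply/all_filterP/allP => z /aH /=; slia.
  have hc : ccont (b :: H).
    by rewrite -ef; apply: (ccont_filter E S h1 h2 h3) => /=; slia.
  case eH: H hc => [|y V] hc; first by have := ccont_size hc.
  have UbH : uniq (b :: y :: V) by rewrite -eH -ef filter_uniq.
  have aH' : forall z, z \in y :: V -> b < z by move=> z hz; apply: aH; rewrite eH.
  case/(min_ins UbH aH'): hc => [hc | [c' [d' [S' [_ hyc]]]]].
    by right; right.
  right; left; exists c' => //.
  by rewrite inE; apply/orP; right; apply: (mem_subseq S'); rewrite inE eqxx.
Qed.
Lemma noD_shape (b : nat) t : b \notin t -> ~ Dp b t ->
  t = filter (fun x => x < b) t ++ filter (fun x => b < x) t.
Proof.
elim: t => [//|x t IH] /=; rewrite inE negb_or => /andP [nbx nbt] nD.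
have nD' : ~ Dp b t.
  move=> [c [d [S h]]]; apply: nD; exists c, d; split => //.
  exact: (subseq_trans S (subseq_cons t x)).
have {IH} IH := IH nbt nD'.
case: (ltngtP x b) => hx.
- by rewrite /= {1}IH.
- have eL : filter (fun x => x < b) t = [::].
    apply/eqP; rewrite -[_ == _]negbK -has_filter; apply/hasP => -[d hd /= hdb].
    apply: nD; exists x, d; split => //=.
    by rewrite eqxx sub1seq.
  by rewrite {1}IH eL.
- by move: nbx; rewrite hx eqxx.
Qed.

Lemma subseq2_catr (c d : nat) L H : subseq [:: c; d] (L ++ H) -> c \notin L ->
  subseq [:: c; d] H.
Proof.
elim: L => [//|x L IH] /=; rewrite inE negb_or => S /andP [ncx ncL].
have nxc : (x == c) = false by rewrite eq_sym (negbTE ncx).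
apply: IH => //; move: S; rewrite ?nxc ?(negbTE ncx) //.
Qed.

Lemma shape_noD (b : nat) L H : all (fun x => x < b) L -> all (fun x => b < x) H ->
  ~ Dp b (L ++ H).
Proof.
move=> /allP aL /allP aH [c [d [S [hd hc]]]].
have ncL : c \notin L by apply/negP => /aL /=; slia.
have := subseq2_catr S ncL => S'.
have : d \in H by apply: (mem_subseq S'); rewrite !inE eqxx orbT.
move/aH => /=; slia.
Qed.

Lemma key1 t : uniq (0 :: 1 :: t) -> (forall x, x \in t -> 1 < x) ->
  (ccont (0 :: 1 :: t) <-> ccont (1 :: t)).
Proof.
move=> U h.
have h0 : forall x, x \in 1 :: t -> 0 < x.
  by move=> x; rewrite inE => /orP [/eqP -> // | /h]; slia.
rewrite (min_ins U h0); split; last by left.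
case => // -[c [d [S [hd _]]]].
have : d \in t by apply: (mem_subseq S); rewrite !inE eqxx orbT.
by move/h; slia.
Qed.

Lemma key2 b L H : uniq (0 :: b :: L ++ H) -> L != [::] ->
  all (fun x => 0 < x < b) L -> all (fun x => b < x) H ->
  (ccont (0 :: b :: L ++ H) <->
   ccont (b :: L) \/ (exists2 c, c \in H & head 0 H < c) \/ ccont H).
Proof.
move=> U nL aL aH.
have aL' : all (fun x => x < b) L by apply/allP => x /(allP aL) /andP [].
have hb : 0 < b.
  case: L nL aL {aL' U} => [//|x L] _ /= /andP [/andP [h1 h2] _]; slia.
have h0 : forall x, x \in b :: L ++ H -> 0 < x.
  move=> x; rewrite inE mem_cat => /orP [/eqP -> // | /orP [/(allP aL) /andP [] // | /(allP aH)]].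
  by move=> /=; slia.
rewrite (min_ins U h0).
have U' : uniq (b :: L ++ H) by move: U => /= /andP [_].
rewrite -(char_B U' nL aL' aH).
split; last by left.
by case => // /(shape_noD aL' aH).
Qed.

Lemma key2shape b t : uniq (0 :: b :: t) -> (forall x, x \in b :: t -> 0 < x) ->
  ~ ccont (0 :: b :: t) ->
  t = filter (fun x => x < b) t ++ filter (fun x => b < x) t.
Proof.
move=> U h0 nc; apply: noD_shape.
  by move: U; rewrite /= => /andP [_ /andP [->]].
by move=> hD; apply: nc; apply/(min_ins U h0); right.
Qed.
Definition ccontb (W : seq nat) : bool :=
  has (fun k => contains_13_42 (rot k W)) (iota 0 (size W)).

Lemma subseq_nth2 (X : seq nat) j1 j2 : j1 < j2 -> j2 < size X ->
  subseq [:: nth 0 X j1; nth 0 X j2] X.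
Proof.
move=> h12 h2.
have h1 : j1 < size X by slia.
have hd : nth 0 X j2 \in drop j1.+1 X.
  have -> : nth 0 X j2 = nth 0 (drop j1.+1 X) (j2 - j1.+1) by rewrite nth_drop; congr nth; slia.
  have hs : j2 - j1.+1 < size X - j1.+1 by slia.
  by apply: mem_nth; rewrite size_drop.
have eX : X = take j1 X ++ nth 0 X j1 :: drop j1.+1 X by rewrite -drop_nth // cat_take_drop.
move: hd; set c := nth 0 X j1; set d := nth 0 X j2 => hd.
suff : subseq [:: c; d] (take j1 X ++ c :: drop j1.+1 X) by rewrite -eX.
have -> : [:: c; d] = [::] ++ [:: c; d] by [].
apply: cat_subseq; first exact: sub0seq.
by rewrite /= eqxx sub1seq.
Qed.

Lemma subseq2_nth (X : seq nat) c d : subseq [:: c; d] X ->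
  exists j1 j2, [/\ j1 < j2, j2 < size X, nth 0 X j1 = c & nth 0 X j2 = d].
Proof.
elim: X => [//|x X IH] /=.
case: (eqVneq x c) => [exc|nxc].
  subst x; rewrite sub1seq => hd.
  exists 0, (index d X).+1; split => //=.
    by rewrite ltnS index_mem.
  by rewrite nth_index.
move/IH => [j1 [j2 [h1 h2 e1 e2]]].
by exists j1.+1, j2.+1; split.
Qed.

Lemma contains_occ w : contains_13_42 w <-> exists i, occ0 (drop i w).
Proof.
split.
  move/existsP => [i /existsP [k /existsP [l /and3P [hik hkl /and3P [h1 h2 h3]]]]].
  have hl := ltn_ord l.
  exists i.
  have hi1 : i.+1 < size w by slia.
  have hi : i < size w by slia.
  rewrite (drop_nth 0 hi) (drop_nth 0 hi1).
  exists (nth 0 w i), (nth 0 w i.+1), (drop i.+2 w), (nth 0 w k), (nth 0 w l).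
  split => //; split; last by slia.
  have ek : nth 0 w k = nth 0 (drop i.+2 w) (k - i.+2) by rewrite nth_drop; congr nth; slia.
  have el : nth 0 w l = nth 0 (drop i.+2 w) (l - i.+2) by rewrite nth_drop; congr nth; slia.
  rewrite ek el; apply: subseq_nth2; rewrite ?size_drop; slia.
move=> [i [a [a' [X [c [d [E [S [h1 [h2 h3]]]]]]]]]].
have [j1 [j2 [hj hj2 e1 e2]]] := subseq2_nth S.
have hs : size (drop i w) = (size X).+2 by rewrite E.
rewrite size_drop in hs.
have hi : i < size w by slia.
have hk : i + 2 + j1 < size w by slia.
have hl : i + 2 + j2 < size w by slia.
have en : forall m, nth 0 w (i + m) = nth 0 (drop i w) m by move=> m; rewrite nth_drop.
apply/existsP; exists (Ordinal hi); apply/existsP; exists (Ordinal hk);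
  apply/existsP; exists (Ordinal hl) => /=.
have ea : nth 0 w i = a by rewrite -(addn0 i) en E.
have ea' : nth 0 w i.+1 = a' by rewrite -addn1 en E.
have ec : nth 0 w (i + 2 + j1) = c by rewrite -addnA en E /= -e1.
have ed : nth 0 w (i + 2 + j2) = d by rewrite -addnA en E /= -e2.
rewrite ea ea' ec ed.
by apply/and5P; split; slia.
Qed.

Lemma occ0_cat R T : occ0 R -> occ0 (R ++ T).
Proof.
move=> [a [a' [X [c [d [-> [S h]]]]]]].
exists a, a', (X ++ T), c, d; split => //; split => //.
by apply: (subseq_trans S); apply: prefix_subseq.
Qed.

Lemma ccontP W : reflect (ccont W) (ccontb W).
Proof.
apply: (iffP hasP).
  move=> [k _ /contains_occ [i hi]].
  have [k' ek'] := rot_comp i k W.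
  exists k'; rewrite -ek' /rot; exact: occ0_cat.
move=> [k hk].
have h4 := occ0_size hk; rewrite size_rot in h4.
case: (ltnP k (size W)) => hkW.
  exists k; first by rewrite mem_iota; slia.
  by apply/contains_occ; exists 0; rewrite drop0.
exists 0; first by rewrite mem_iota; slia.
by apply/contains_occ; exists 0; rewrite drop0 rot0 -(rot_oversize hkW).
Qed.

Lemma ccontb_rot k W : ccontb (rot k W) = ccontb W.
Proof. by apply/ccontP/ccontP; rewrite ccont_rot. Qed.
Section Words.
Variable n : nat.

Lemma size_word (s : 'S_n) : size (word s) = n.
Proof. by rewrite /word size_map size_enum_ord. Qed.

Lemma word_nth (s : 'S_n) (i : 'I_n) : nth 0 (word s) i = s i.
Proof.
by rewrite /word (nth_map i) ?size_enum_ord // nth_ord_enum.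
Qed.

Lemma word_uniq (s : 'S_n) : uniq (word s).
Proof.
rewrite /word map_inj_uniq ?enum_uniq // => i j /val_inj; exact: perm_inj.
Qed.

Lemma word_perm (s : 'S_n) : perm_eq (word s) (iota 0 n).
Proof.
apply: uniq_perm; [exact: word_uniq | exact: iota_uniq | move=> z].
rewrite mem_iota add0n /=; apply/mapP/idP => [[i _ ->] // | hz].
exists ((s^-1)%g (Ordinal hz)); first by rewrite mem_enum.
by rewrite permKV.
Qed.

Lemma word_inj : injective (@word n).
Proof.
move=> s t e; apply/permP => i; apply: val_inj => /=.
by have := word_nth s i; rewrite e word_nth => ->.
Qed.

Lemma word_surj w : perm_eq w (iota 0 n) -> exists t : 'S_n, word t = w.
Proof.
move=> pw.
have hsz : size w = n by rewrite (perm_size pw) size_iota.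
have hlt : forall i : 'I_n, nth 0 w i < n.
  move=> i; have : nth 0 w i \in iota 0 n.
    by rewrite -(perm_mem pw) mem_nth // hsz.
  by rewrite mem_iota.
pose f := fun i : 'I_n => Ordinal (hlt i).
have finj : injective f.
  move=> i j /(congr1 val) /= /eqP; rewrite nth_uniq ?hsz //.
    by move/eqP/val_inj.
  by rewrite (perm_uniq pw) iota_uniq.
exists (perm finj).
apply: (eq_from_nth (x0 := 0)); first by rewrite size_word hsz.
move=> i; rewrite size_word => hi.
by rewrite (word_nth _ (Ordinal hi)) permE.
Qed.

End Words.

Lemma word_head n (s : 'S_n.+1) : word s = val (s ord0) :: behead (word s).
Proof.
have := size_word s; case e: (word s) => [//|x r] _ /=.
by have := word_nth s ord0; rewrite e /= => ->.
Qed.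

Lemma mem_cycP n (s t : 'S_n.+1) : t \in cyc s <-> exists k, word t = rot k (word s).
Proof.
rewrite inE; split.
  by move/existsP => [r /eqP e]; exists r.
move=> [k e]; apply/existsP.
case: (ltnP k n.+1) => hk.
  by exists (Ordinal hk); rewrite e.
by exists ord0; rewrite e rot_oversize ?rot0 // size_word.
Qed.

Lemma cyc_containsE n (s : 'S_n.+1) : cyc_contains s = ccontb (word s).
Proof.
rewrite /cyc_contains /ccontb size_word; apply/existsP/hasP.
  move=> [t /andP [ht hc]]; move: ht; rewrite inE => /existsP [r /eqP e].
  by exists (val r); [rewrite mem_iota /= | rewrite -e].
move=> [k hk hc]; move: hk; rewrite mem_iota /= => hk.
have [t et] : exists t : 'S_n.+1, word t = rot k (word s).
  by apply: word_surj; rewrite perm_rot word_perm.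
exists t; apply/andP; split; last by rewrite et.
by rewrite inE; apply/existsP; exists (Ordinal hk); rewrite et.
Qed.

Lemma cyc_eq n (s t : 'S_n.+1) : t \in cyc s -> cyc t = cyc s.
Proof.
move/mem_cycP => [j ej]; apply/setP => u.
apply/idP/idP => /mem_cycP [k ek]; apply/mem_cycP.
  by rewrite ek ej; apply: rot_comp.
have ews : word s = rot (size (word t) - j) (word t).
  have -> : rot (size (word t) - j) (word t) = rotr j (word t) by [].
  by rewrite ej rotK.
by rewrite ek ews; apply: rot_comp.
Qed.

Lemma size_bij (T U : eqType) (s : seq T) (s' : seq U) (f : T -> U) :
  uniq s -> uniq s' -> {in s &, injective f} -> {in s, forall x, f x \in s'} ->
  (forall y, y \in s' -> exists2 x, x \in s & y = f x) -> size s = size s'.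
Proof.
move=> us us' finj fin fsur.
rewrite -(size_map f); apply: perm_size; apply: uniq_perm => //.
  by rewrite map_inj_in_uniq.
move=> y; apply/mapP/idP => [[x hx ->] | hy]; first exact: fin.
by have [x hx ->] := fsur y hy; exists x.
Qed.

Definition Alist n := [seq w <- permutations (iota 0 n) | (head 0 w == 0) && ~~ ccontb w].

Lemma card_Av n : #|Av n.+1| = size (Alist n.+1).
Proof.
pose B := [set s : 'S_n.+1 | (val (s ord0) == 0) && ~~ cyc_contains s].
have eAv : Av n.+1 = (@cyc n.+1) @: B.
  apply/setP => C; apply/imsetP/imsetP => -[s hs ->].
    move: hs; rewrite inE => hs.
    have h0 : 0 \in word s by rewrite (perm_mem (word_perm s)) mem_iota.
    have [t et] : exists t : 'S_n.+1, word t = rot (index 0 (word s)) (word s).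
      by apply: word_surj; rewrite perm_rot word_perm.
    have ht : t \in cyc s by apply/mem_cycP; exists (index 0 (word s)).
    exists t; last by rewrite (cyc_eq ht).
    rewrite inE; apply/andP; split.
      have := word_head t; rewrite et rot_index // => -[e].
      by apply/eqP; exact: (esym e).
    by rewrite cyc_containsE et ccontb_rot -cyc_containsE.
  by exists s => //; move: hs; rewrite !inE => /andP [_ ->].
rewrite eAv card_in_imset; last first.
  move=> s1 s2 h1 h2 e.
  have : s2 \in cyc s1 by rewrite e; apply/mem_cycP; exists 0; rewrite rot0.
  move/mem_cycP => [k ek].
  move: h1 h2; rewrite !inE => /andP [/eqP h1 _] /andP [/eqP h2 _].
  apply: word_inj.
  have e1 := word_head s1; rewrite h1 in e1.
  have e2 := word_head s2; rewrite h2 ek in e2.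
  by rewrite ek (rot_head0 (word_uniq s1) e1 e2).
rewrite cardE; apply: (size_bij (f := @word n.+1)).
- exact: enum_uniq.
- by rewrite filter_uniq // permutations_uniq.
- by move=> x y _ _; apply: word_inj.
- move=> s; rewrite mem_enum inE => /andP [/eqP h0 hc].
  rewrite mem_filter mem_permutations word_perm andbT -cyc_containsE hc andbT.
  by rewrite word_head h0.
- move=> w; rewrite mem_filter mem_permutations => /andP [/andP [hh hc] hp].
  have [t et] := word_surj hp.
  exists t => //.
  rewrite mem_enum inE cyc_containsE et hc andbT.
  by have := word_head t; rewrite et; case: w hh {hp hc et} => //= x r /eqP -> [<-].
Qed.
Definition As m k := [seq w <- permutations (iota m k) | (head m w == m) && ~~ ccontb w].
Definition Ms m k := [seq w <- permutations (iota m k) |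
                      (head (m + k.-1) w == m + k.-1) && ~~ ccontb w].

Lemma perm_iotaP (s : seq nat) m k :
  perm_eq s (iota m k) <-> uniq s /\ (forall z, (z \in s) = (m <= z < m + k)).
Proof.
split.
  move=> p; split; first by rewrite (perm_uniq p) iota_uniq.
  by move=> z; rewrite (perm_mem p) mem_iota.
move=> [u h]; apply: uniq_perm => //; first exact: iota_uniq.
by move=> z; rewrite h mem_iota.
Qed.

Lemma ccontb_shift m W : ccontb (map (addn m) W) = ccontb W.
Proof.
apply/ccontP/ccontP => h.
  have -> : W = map (subn^~ m) (map (addn m) W).
    by rewrite -map_comp map_id_in // => z _ /=; rewrite addKn.
  apply: ccont_map h => x y /mapP [x' _ ->] /mapP [y' _ ->].
  by rewrite !addKn ltn_add2l.
by apply: ccont_map h => x y _ _; rewrite ltn_add2l.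
Qed.

Lemma shift_count m k (P Q : seq nat -> bool) :
  (forall w, perm_eq w (iota 0 k) -> Q (map (addn m) w) = P w) ->
  size [seq w <- permutations (iota m k) | Q w] =
  size [seq w <- permutations (iota 0 k) | P w].
Proof.
move=> hPQ.
have eio : iota m k = map (addn m) (iota 0 k) by rewrite -iotaDl addn0.
symmetry; apply: (size_bij (f := map (addn m))).
- by rewrite filter_uniq // permutations_uniq.
- by rewrite filter_uniq // permutations_uniq.
- by move=> x y _ _; apply: inj_map; apply: addnI.
- move=> w; rewrite !mem_filter !mem_permutations => /andP [hP hp].
  by rewrite hPQ // hP eio perm_map.
- move=> y; rewrite mem_filter mem_permutations => /andP [hQ hp].
  have hge : forall z, z \in y -> m <= z by move=> z; rewrite (perm_mem hp) mem_iota => /andP [].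
  have ey : map (addn m) (map (subn^~ m) y) = y.
    rewrite -map_comp map_id_in // => z /hge hz /=; slia.
  have hp' : perm_eq (map (subn^~ m) y) (iota 0 k).
    have eid : map (subn^~ m) (map (addn m) (iota 0 k)) = iota 0 k.
      by rewrite -map_comp map_id_in // => z _ /=; rewrite addKn.
    by have := perm_map (subn^~ m) hp; rewrite eio eid.
  exists (map (subn^~ m) y) => //.
  by rewrite mem_filter mem_permutations hp' andbT -hPQ // ey.
Qed.

Lemma size_As m k : size (As m k) = size (As 0 k).
Proof.
apply: shift_count => w _.
rewrite ccontb_shift; congr (_ && _).
by case: w => [|x w] /=; rewrite ?eqxx // -{2}(addn0 m) eqn_add2l.
Qed.

Lemma size_Ms m k : size (Ms m k) = size (Ms 0 k).
Proof.
apply: shift_count => w _.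
rewrite ccontb_shift; congr (_ && _).
by case: w => [|x w] /=; rewrite ?eqxx // eqn_add2l.
Qed.

Lemma cons_head (w : seq nat) x : 0 < size w -> head x w = x -> w = x :: behead w.
Proof. by case: w => [//|y w] /= _ ->. Qed.

Lemma size_As_Ms k : 0 < k -> size (As 0 k) = size (Ms 0 k).
Proof.
move=> hk.
have mem0 : forall w, perm_eq w (iota 0 k) -> 0 \in w.
  by move=> w p; rewrite (perm_mem p) mem_iota; slia.
have memk : forall w, perm_eq w (iota 0 k) -> k.-1 \in w.
  by move=> w p; rewrite (perm_mem p) mem_iota; slia.
have szk : forall w, perm_eq w (iota 0 k) -> 0 < size w.
  by move=> w p; rewrite (perm_size p) size_iota.
have uk : forall w, perm_eq w (iota 0 k) -> uniq w.
  by move=> w p; rewrite (perm_uniq p) iota_uniq.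
apply: (size_bij (f := fun w => rot (index k.-1 w) w)).
- by rewrite filter_uniq // permutations_uniq.
- by rewrite filter_uniq // permutations_uniq.
- move=> w1 w2; rewrite !mem_filter !mem_permutations /=.
  move=> /andP [/andP [/eqP h1 _] p1] /andP [/andP [/eqP h2 _] p2] e.
  have e1 := cons_head (szk _ p1) h1.
  have e2 := cons_head (szk _ p2) h2.
  have : w2 = rotr (index k.-1 w2) (rot (index k.-1 w1) w1) by rewrite e rotK.
  rewrite /rotr; have [c ->] := rot_comp (size (rot (index k.-1 w1) w1) - index k.-1 w2)
                                    (index k.-1 w1) w1 => ew2.
  have := rot_head0 (uk _ p1) e1 (etrans (esym ew2) e2).
  by rewrite -ew2.
- move=> w; rewrite !mem_filter !mem_permutations /= => /andP [/andP [_ hc] p].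
  rewrite perm_rot p ccontb_rot hc rot_index ?memk //= eqxx //.
- move=> v; rewrite !mem_filter !mem_permutations /= => /andP [/andP [/eqP hv hc] p].
  exists (rot (index 0 v) v).
    by rewrite mem_filter mem_permutations perm_rot p ccontb_rot hc rot_index ?mem0 //= eqxx.
  have ev := cons_head (szk _ p) hv.
  have [c ec] := rot_comp (index k.-1 (rot (index 0 v) v)) (index 0 v) v.
  rewrite ec; symmetry; apply: (rot_head0 (uk _ p) ev (s := behead (rot c v))).
  apply: cons_head; first by rewrite size_rot szk.
  set w := rot (index 0 v) v in ec *.
  have kw : k.-1 \in w by rewrite /w mem_rot; exact: memk.
  by rewrite -ec (rot_index kw).
Qed.
Lemma sum_eq1 v lo hi : lo <= v < hi -> \sum_(lo <= b < hi) (v == b) = 1.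
Proof.
move=> h.
rewrite (eq_bigr (fun b => if v == b then 1 else 0)); last by move=> b _; case: (v == b).
rewrite -big_mkcond sum1_count.
have -> : count (fun b => v == b) (index_iota lo hi) = count_mem v (index_iota lo hi).
  by apply: eq_count => b; rewrite eq_sym.
rewrite count_uniq_mem; last by rewrite /index_iota iota_uniq.
by rewrite mem_index_iota h.
Qed.

Lemma size_split (s : seq (seq nat)) lo hi (g : seq nat -> nat) :
  (forall w, w \in s -> lo <= g w < hi) ->
  size s = \sum_(lo <= b < hi) size [seq w <- s | g w == b].
Proof.
elim: s => [|x s IH] h.
  by rewrite big1.
have hs : forall w, w \in s -> lo <= g w < hi.
  by move=> w hw; apply: h; rewrite inE hw orbT.
rewrite /= (IH hs).
transitivity (\sum_(lo <= b < hi) ((g x == b) + size [seq w <- s | g w == b])).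
  by rewrite big_split /= sum_eq1 ?add1n //; apply: h; rewrite inE eqxx.
by apply: eq_bigr => b _ /=; case: (g x == b).
Qed.

Lemma key1b n t : perm_eq (0 :: 1 :: t) (iota 0 n) -> ccontb (0 :: 1 :: t) = ccontb (1 :: t).
Proof.
move/perm_iotaP => [U hm].
have ht : forall x, x \in t -> 1 < x.
  move=> x hx.
  have hx0 : x != 0.
    by apply/eqP => e; move: U; rewrite /= inE -e hx !orbT.
  have hx1 : x != 1.
    by apply/eqP => e; move: U; rewrite /= -e hx andbF.
  by move: hx0 hx1; slia.
have e := key1 U ht.
by apply/ccontP/ccontP => h; apply/e.
Qed.

Lemma head_max (y : seq nat) m k : perm_eq y (iota m k) ->
  (head (m + k.-1) y == m + k.-1) = ~~ has (fun c => head 0 y < c) y.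
Proof.
case: y => [|h y] p; first by rewrite /= eqxx.
case: k p => [|k] p; first by have := perm_size p; rewrite size_iota.
move/perm_iotaP: p => [U hm] /=.
rewrite ltnn /=.
apply/eqP/hasPn => [eh c hc | hn].
  have := hm c; rewrite inE hc orbT => /esym; slia.
have hk : m + k \in h :: y by rewrite hm; slia.
move: hk; rewrite inE => /orP [/eqP -> // | hk].
have := hn _ hk => /negP hn'.
have := hm h; rewrite inE eqxx orTb => /esym hh.
apply/eqP; rewrite eqn_leq; apply/andP; split; first by slia.
rewrite leqNgt; apply/negP => hlt; apply: hn'; slia.
Qed.

Lemma iota_split n b : 0 < b < n -> iota 0 n = 0 :: iota 1 b ++ iota b.+1 (n.-1 - b).
Proof.
move=> hb; case: n hb => [|n'] hb; first by slia.
have -> : iota 0 n'.+1 = 0 :: iota 1 n' by [].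
rewrite -pred_Sn; congr (_ :: _).
have -> : iota 1 n' = iota 1 (b + (n' - b)) by congr iota; slia.
by rewrite iotaD add1n.
Qed.

Lemma keyb2 n b x y : 1 < b < n -> perm_eq x (iota 1 b) ->
  perm_eq y (iota b.+1 (n.-1 - b)) -> head b x = b ->
  ccontb (0 :: x ++ y) = [|| ccontb x, has (fun c => head 0 y < c) y | ccontb y].
Proof.
move=> hb px py hx.
have pw : perm_eq (0 :: x ++ y) (iota 0 n).
  by rewrite (iota_split (n := n) (b := b)) ?perm_cons ?perm_cat //; slia.
have szx : size x = b by rewrite (perm_size px) size_iota.
have ex : x = b :: behead x by apply: cons_head => //; rewrite szx; slia.
move: pw; rewrite ex => /perm_iotaP [U hm].
move/perm_iotaP: px => [Ux hmx]; move/perm_iotaP: py => [Uy hmy].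
rewrite ex in Ux hmx.
set L := behead x in ex U hm Ux hmx *.
have nL : L != [::].
  by apply/eqP => eL; move: szx; rewrite ex eL /=; slia.
have bL : b \notin L by move: Ux => /= /andP [].
have aL : all (fun z => 0 < z < b) L.
  apply/allP => z hz.
  have := hmx z; rewrite inE hz orbT => /esym hz'.
  have : z != b by apply/eqP => e; move: bL; rewrite -e hz.
  move=> /=; slia.
have aH : all (fun z => b < z) y.
  by apply/allP => z hz; have := hmy z; rewrite hz => /esym /= ?; slia.
have E := key2 U nL aL aH.
apply/ccontP/idP.
  move/E => -[/ccontP hB | [[c hc hlt] | /ccontP hY]].
  - by rewrite hB.
  - by apply/orP; right; apply/orP; left; apply/hasP; exists c.
  - by rewrite hY !orbT.
move=> /or3P [/ccontP h | /hasP [c hc hlt] | /ccontP h]; apply/E.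
- by left.
- by right; left; exists c.
- by right; right.
Qed.
Lemma ccontb_small W : size W < 4 -> ccontb W = false.
Proof. by move=> h; apply/negbTE/negP => /ccontP /ccont_size; slia. Qed.

Lemma head_nth (s : seq nat) x : 0 < size s -> head x s = nth 0 s 0.
Proof. by case: s. Qed.

Lemma cnt_b1 n : 1 < n -> size [seq w <- As 0 n | nth 0 w 1 == 1] = size (As 1 n.-1).
Proof.
move=> hn.
have ei : iota 0 n = 0 :: iota 1 n.-1 by case: n hn.
symmetry; apply: (size_bij (f := fun t => 0 :: t)).
- by rewrite filter_uniq // permutations_uniq.
- by rewrite !filter_uniq // permutations_uniq.
- by move=> ? ? _ _ [].
- move=> t; rewrite !mem_filter !mem_permutations => /andP [/andP [/eqP h1 hc] p].
  have szt : 0 < size t by rewrite (perm_size p) size_iota; slia.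
  have et := cons_head szt h1.
  have pw : perm_eq (0 :: t) (iota 0 n) by rewrite ei perm_cons.
  rewrite pw andbT /=; apply/andP; split; first by rewrite et.
  have pw' : perm_eq (0 :: 1 :: behead t) (iota 0 n) by rewrite -et.
  by rewrite et (key1b pw') -et.
- move=> w; rewrite !mem_filter !mem_permutations => /andP [/eqP h1 /andP [/andP [/eqP h0 hc] p]].
  have szw : 0 < size w by rewrite (perm_size p) size_iota; slia.
  have ew := cons_head szw h0.
  exists (behead w); last by [].
  move: p h1 hc; rewrite ew ei perm_cons /= => p h1 hc.
  have szt : 0 < size (behead w) by rewrite (perm_size p) size_iota; slia.
  have ht : head 1 (behead w) = 1 by case: (behead w) szt h1.
  have et := cons_head szt ht.
  rewrite mem_filter mem_permutations p andbT ht eqxx /=.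
  have pw' : perm_eq (0 :: 1 :: behead (behead w)) (iota 0 n) by rewrite -et ei perm_cons.
  by rewrite et -(key1b pw') -et.
Qed.

Lemma cnt_b n b : 1 < b < n ->
  size [seq w <- As 0 n | nth 0 w 1 == b] = size (Ms 1 b) * size (Ms b.+1 (n.-1 - b)).
Proof.
move=> hb.
have e1b : 1 + b.-1 = b by slia.
rewrite -(size_allpairs (fun x y => 0 :: x ++ y)).
symmetry; apply: (size_bij (f := id)).
- apply: allpairs_uniq; rewrite ?filter_uniq ?permutations_uniq //.
  move=> p1 p2 /allpairsP [[x1 y1] [hx1 hy1 ->]] /allpairsP [[x2 y2] [hx2 hy2 ->]] /= [e].
  move: hx1 hx2; rewrite !mem_filter !mem_permutations => /andP [_ p1'] /andP [_ p2'].
  have sz : size x1 = size x2 by rewrite (perm_size p1') (perm_size p2').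
  by move: e => /eqP; rewrite eqseq_cat // => /andP [/eqP -> /eqP ->].
- by rewrite !filter_uniq // permutations_uniq.
- by [].
- move=> z /allpairsP [[x y] [hx hy ->]] /=.
  move: hx hy; rewrite !mem_filter !mem_permutations e1b.
  move=> /andP [/andP [/eqP hxh hcx] px] /andP [/andP [hyh hcy] py].
  have szx : size x = b by rewrite (perm_size px) size_iota.
  have ex : x = b :: behead x by apply: cons_head => //; rewrite szx; slia.
  have hn1 : nth 0 (0 :: x ++ y) 1 = b by rewrite ex.
  have pw : perm_eq (0 :: x ++ y) (iota 0 n).
    by rewrite (iota_split (n := n) (b := b)) ?perm_cons ?perm_cat //; slia.
  have hc : ccontb (0 :: x ++ y) = false.
    rewrite (keyb2 hb px py hxh) (negbTE hcx) (negbTE hcy) orbF /=.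
    by apply/negbTE; rewrite -(head_max py).
  by rewrite hn1 pw hc eqxx.
- move=> w; rewrite !mem_filter !mem_permutations.
  move=> /andP [/eqP h1 /andP [/andP [/eqP h0 hc] p]].
  have szw : size w = n by rewrite (perm_size p) size_iota.
  have ew0 := cons_head (ltac:(rewrite szw; slia) : 0 < size w) h0.
  set t0 := behead w in ew0.
  have szt0 : size t0 = n.-1 by rewrite /t0 size_behead szw.
  have ht0 : head b t0 = b.
    rewrite head_nth; last by rewrite szt0; slia.
    by move: h1; rewrite ew0.
  have et0 := cons_head (ltac:(rewrite szt0; slia) : 0 < size t0) ht0.
  set t := behead t0 in et0.
  have ew : w = 0 :: b :: t by rewrite ew0 et0.
  rewrite ew in p hc.
  move/perm_iotaP: (p) => [U hm].
  have h0' : forall x, x \in b :: t -> 0 < x.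
    move=> x hx; rewrite lt0n; apply/eqP => ex; subst x.
    by move: U; rewrite /= hx.
  have hsh := key2shape U h0' (fun h => (negP hc) (introT (ccontP _) h)).
  set L := filter (fun x => x < b) t in hsh.
  set H := filter (fun x => b < x) t in hsh.
  have ht : forall z, (z \in t) = [&& z < n, z != 0 & z != b].
    move=> z; have := hm z; rewrite !inE add0n /= => hz.
    move: U; rewrite /= !inE negb_or => /andP [/andP [n0b n0t] /andP [nbt _]].
    case: (eqVneq z 0) => [ez | nz0].
      by subst z; rewrite (negbTE n0t) /= !andbF.
    case: (eqVneq z b) => [ez | nzb].
      by subst z; rewrite (negbTE nbt) /= !andbF.
    by move: hz; rewrite (negbTE nz0) (negbTE nzb) /= andbT => ->.
  have Ut : uniq t by move: U => /= /and3P [_ _ ->].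
  have nbt : b \notin t by move: U => /= /and3P [_ -> _].
  have px : perm_eq (b :: L) (iota 1 b).
    apply/perm_iotaP; split.
      by rewrite /= mem_filter (negbTE nbt) andbF filter_uniq.
    by move=> z; rewrite inE mem_filter ht; slia.
  have py : perm_eq H (iota b.+1 (n.-1 - b)).
    apply/perm_iotaP; split; first by rewrite filter_uniq.
    by move=> z; rewrite mem_filter ht; slia.
  have ewc : 0 :: b :: t = 0 :: (b :: L) ++ H by rewrite {1}hsh.
  have := keyb2 hb px py (erefl _); rewrite -ewc (negbTE hc) => /esym.
  move=> /norP [hcx /norP [hhas hcy]].
  exists (0 :: (b :: L) ++ H); last by rewrite ew ewc.
  apply/allpairsP; exists (b :: L, H); split => //.
  + by rewrite mem_filter mem_permutations px e1b /= eqxx hcx.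
  + by rewrite mem_filter mem_permutations py (head_max py) hhas hcy.
Qed.
Lemma rec_A n : 1 < n ->
  size (As 0 n) = size (As 0 n.-1) + \sum_(2 <= b < n) size (Ms 0 b) * size (Ms 0 (n.-1 - b)).
Proof.
move=> hn.
rewrite (size_split (lo := 1) (hi := n) (g := fun w => nth 0 w 1)); last first.
  move=> w; rewrite mem_filter mem_permutations => /andP [/andP [/eqP h0 _] p].
  have szw : size w = n by rewrite (perm_size p) size_iota.
  move/perm_iotaP: p => [U hm].
  have ew := cons_head (ltac:(rewrite szw; slia) : 0 < size w) h0.
  have hin : nth 0 w 1 \in w by apply: mem_nth; rewrite szw.
  have hlt : nth 0 w 1 < n by have := hm (nth 0 w 1); rewrite hin => /esym; slia.
  have hne : nth 0 w 1 != 0.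
    apply/eqP => e; move: U; rewrite ew /= => /andP [n0 _]; move: n0.
    have szt : 0 < size (behead w) by rewrite size_behead szw; slia.
    by rewrite -{1}e ew /= mem_nth.
  by move: hne hlt; slia.
rewrite big_ltn // cnt_b1 // size_As; congr (_ + _).
apply: eq_big_nat => b hb.
by rewrite cnt_b // !size_Ms.
Qed.

Lemma size_Ms0 : size (Ms 0 0) = 1.
Proof. by []. Qed.

Lemma size_As1 : size (As 0 1) = 1.
Proof. by rewrite /As /= ccontb_small. Qed.

Unset Implicit Arguments.

Theorem theorem5p5 (D : nat -> nat) :
  D 1 = 2 -> D 2 = 1 -> D 3 = 1 ->
  (forall m, 4 <= m -> D m = \sum_(1 <= k < m - 2) D k * D (m - k)) ->
  forall n, 1 <= n -> #|Av n| = D n.+1.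
Proof.
move=> D1 D2 D3 DR n hn.
case: n hn => [//|n] _.
rewrite card_Av.
have main : forall N m, 0 < m <= N -> size (As 0 m) = D m.+1.
  elim=> [|N IH] m hm; first by slia.
  case: (leqP m N) => hmN; first by apply: IH; slia.
  have IHa : forall j, 0 < j < m -> size (As 0 j) = D j.+1.
    by move=> j hj; apply: IH; slia.
  case: m hm hmN IHa => [|[|[|p]]] hm hmN IHa; first by slia.
  - by rewrite size_As1 D2.
  - by rewrite rec_A // big_geq // size_As1 D3.
  have hMs : forall j, 0 < j -> size (Ms 0 j) = size (As 0 j).
    by move=> j hj; rewrite size_As_Ms.
  rewrite rec_A // (DR p.+4) //.
  have -> : p.+4 - 2 = p.+2 by slia.
  rewrite [in RHS]big_ltn // [in LHS]big_nat_recr //= subnn size_Ms0 muln1.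
  rewrite hMs // D1 (IHa p.+2); last by slia.
  have -> : p.+4 - 1 = p.+3 by slia.
  have e1 : \sum_(2 <= b < p.+2) size (Ms 0 b) * size (Ms 0 (p.+2 - b)) =
            \sum_(2 <= b < p.+2) size (As 0 b) * size (As 0 (p.+2 - b)).
    by apply: eq_big_nat => b hb; rewrite !hMs //; slia.
  have e2 : \sum_(2 <= k < p.+2) D k * D (p.+4 - k) =
            \sum_(2 <= k < p.+2) size (As 0 k.-1) * size (As 0 (p.+3 - k)).
    apply: eq_big_nat => k hk; rewrite (IHa k.-1); last by slia.
    rewrite (IHa (p.+3 - k)); last by slia.
    by congr (D _ * D _); slia.
  have e3 : \sum_(2 <= k < p.+2) size (As 0 k.-1) * size (As 0 (p.+3 - k)) =
            \sum_(2 <= b < p.+2) size (As 0 b) * size (As 0 (p.+2 - b)).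
    rewrite big_nat_rev; apply: eq_big_nat => k hk.
    have -> : (2 + p.+2 - k.+1).-1 = p.+2 - k by slia.
    have -> : p.+3 - (2 + p.+2 - k.+1) = k by slia.
    by rewrite mulnC.
  rewrite e1 e2 e3; slia.
by apply: (main n.+1); slia.
Qed.
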